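(* Assume the Margin assumption with $y_*\in\mathbb{R}^d_+$, Boundedness, and that the selection $v$ satisfies $v(y)\in\mathbb{R}^d_+$ for all $y\in\mathbb{R}^d_+$. For agents $A_0,\dots,A_T\in\mathcal{A}$, let $(y_t,b_t)$ be generated by the projected strategic perceptron with $\mathbb{L}=\mathbb{R}^d_+\times\mathbb{R}$ and $\gamma=1$. Then $$\sum_{t\in\mathcal{M}_T}L_{\mathrm{hinge}}\Big(\big(\tfrac{y_*}{d_*\|y_*\|_*},\tfrac{b_*}{d_*\|y_*\|_*}\big);(s(A_t,y_t,b_t),1),\ell(A_t)\Big)\le0,$$ and consequently $$|\mathcal{M}_T|\le\frac{(\|y_*\|_2^2+b_*^2)(\widetilde D^2+1)}{\|y_*\|_*^2\,d_*^2}.$$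
   Context: Setting: $\mathcal{A}\subseteq\mathbb{R}^d$, labels $\ell(A)\in\{\pm1\}$; $\operatorname{sign}(0)=+1$; norm $\|\cdot\|$ with dual $\|y\|_*=\max_{\|w\|\le1}y^\top w$; constant $c>0$; a fixed selection $v$ with $v(0)=0$ and $v(y)\in\arg\max_{\|w\|\le1}y^\top w$ for $y\ne0$, with $v(\lambda y)=v(y)$ for $\lambda>0$. Predicted label $\hat\ell(x,y,b)=\operatorname{sign}(y^\top x+b-2\|y\|_*/c)$. Response: for $y\ne0$, $r(A,y,b)=A+(\tfrac2c-\tfrac{y^\top A+b}{\|y\|_*})v(y)$ if $0\le\tfrac{y^\top A+b}{\|y\|_*}<\tfrac2c$, else $A$. Proxy: for $y\ne0$, $s(A,y,b)=A-\tfrac{y^\top A+b}{\|y\|_*}v(y)$ if $0\le\tfrac{y^\top A+b}{\|y\|_*}<\tfrac2c$ and $\ell(A)=-1$; $=A+(\tfrac2c-\tfrac{y^\top A+b}{\|y\|_*})v(y)$ if the range condition holds and $\ell(A)=+1$; $=A$ otherwise; $r(A,0,b)=s(A,0,b)=A$. Margin assumption: $d_*:=\max_{y\ne0,b}\min_{A\in\mathcal{A}}\ell(A)\frac{y^\top A+b}{\|y\|_*}$ attained at $(y_*,b_* )$, $y_*\ne0$, $d_*>0$. Boundedness: $D:=\sup_{A\in\mathcal{A}}\|A\|_2<\infty$; $C_{\|\cdot\|}=\max_y\|v(y)\|_2$; $\widetilde D=D+\tfrac2cC_{\|\cdot\|}$. Hinge loss $L_{\mathrm{hinge}}(q;\xi,\ell)=\max\{0,1-\ell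 q^\top\xi\}$. Projected strategic perceptron with closed convex cone $\mathbb{L}$ and stepsize $\gamma$: $q_0=(y_0,b_0)=(0,0)$; for $t=0,\dots,T$: agent $A_t$ is shown $(y_t,b_t)$, responds $r(A_t,y_t,b_t)$, is predicted $\hat\ell(r(A_t,y_t,b_t),y_t,b_t)$; with $\xi_t=(s(A_t,y_t,b_t),1)$, $z_{t+1}=q_t+\gamma\ell(A_t)\xi_t$ on a mistake, else $z_{t+1}=q_t$; $q_{t+1}=(y_{t+1},b_{t+1})=\Pi_{\mathbb{L}}(z_{t+1})$ (Euclidean projection). Mistake set $\mathcal{M}_T=\{t\in\{0,\dots,T\}:\hat\ell(r(A_t,y_t,b_t),y_t,b_t)\ne\ell(A_t)\}$. *)

(* Defs.v *)
From HB Require Import structures.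
From mathcomp Require Import all_boot all_order all_algebra.
From mathcomp Require Import boolp classical_sets reals.
Set Implicit Arguments. Unset Strict Implicit. Unset Printing Implicit Defensive.
Import Order.TTheory GRing.Theory Num.Theory.
Local Open Scope ring_scope.
Local Open Scope classical_set_scope.

Section StrategicPerceptron.
Variables (R : realType) (d : nat).
Local Notation vec := 'rV[R]_d.

Definition dotv (x y : vec) : R := \sum_(i < d) x 0 i * y 0 i.
Definition norm2 (x : vec) : R := Num.sqrt (dotv x x).

Definition is_norm (N : vec -> R) : Prop :=
  [/\ forall x, 0 <= N x,
      forall x, N x = 0 -> x = 0,
      forall (a : R) x, N (a *: x) = `|a| * N x &
      forall x y, N (x + y) <= N x + N y].

(* dual norm ||y||_* = max_{||w||<=1} y^T w (written as a sup; attained) *)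
Definition dualnorm (N : vec -> R) (y : vec) : R :=
  sup [set dotv y w | w in [set w | N w <= 1]].

Definition valid_selection (N : vec -> R) (v : vec -> vec) : Prop :=
  [/\ v 0 = 0,
      forall y, y != 0 -> N (v y) <= 1 /\ (forall w, N w <= 1 -> dotv y w <= dotv y (v y)) &
      forall (lam : R) y, 0 < lam -> v (lam *: y) = v y].

Definition sgn (x : R) : R := if 0 <= x then 1 else -1.

Definition pred_label (N : vec -> R) (c : R) (x y : vec) (b : R) : R :=
  sgn (dotv y x + b - 2 * dualnorm N y / c).

Definition response (N : vec -> R) (c : R) (v : vec -> vec) (A y : vec) (b : R) : vec :=
  if y == 0 then A else
  let z := (dotv y A + b) / dualnorm N y in
  if (0 <= z) && (z < 2 / c) then A + (2 / c - z) *: v y else A.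

Definition proxy (N : vec -> R) (c : R) (v : vec -> vec) (ell : vec -> R)
    (A y : vec) (b : R) : vec :=
  if y == 0 then A else
  let z := (dotv y A + b) / dualnorm N y in
  if (0 <= z) && (z < 2 / c) then
    (if ell A == -1 then A - z *: v y
     else if ell A == 1 then A + (2 / c - z) *: v y else A)
  else A.

Definition margin (N : vec -> R) (Aset : set vec) (ell : vec -> R) (y : vec) (b : R) : R :=
  inf [set ell A * (dotv y A + b) / dualnorm N y | A in Aset].

Definition Dbound (Aset : set vec) : R := sup [set norm2 A | A in Aset].
Definition Cbound (v : vec -> vec) : R := sup [set norm2 (v y) | y in [set: vec]].
Definition Dtilde (Aset : set vec) (c : R) (v : vec -> vec) : R :=
  Dbound Aset + 2 / c * Cbound v.

Definition hinge (q : vec * R) (xi : vec * R) (l : R) : R :=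
  Num.max 0 (1 - l * (dotv q.1 xi.1 + q.2 * xi.2)).

Definition orthant (y : vec) : Prop := forall i, 0 <= y 0 i.
Definition Lcone : set (vec * R) := [set w | orthant w.1].

Definition sqdist (p z : vec * R) : R := dotv (p.1 - z.1) (p.1 - z.1) + (p.2 - z.2) ^+ 2.

Definition is_proj (L : set (vec * R)) (z p : vec * R) : Prop :=
  L p /\ forall w, L w -> sqdist p z <= sqdist w z.

Definition mistake (N : vec -> R) (c : R) (v : vec -> vec) (ell : vec -> R)
    (A : vec) (q : vec * R) : bool :=
  pred_label N c (response N c v A q.1 q.2) q.1 q.2 != ell A.

Definition xi_of (N : vec -> R) (c : R) (v : vec -> vec) (ell : vec -> R)
    (A : vec) (q : vec * R) : vec * R := (proxy N c v ell A q.1 q.2, 1).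

Definition pre_update (N : vec -> R) (c : R) (v : vec -> vec) (ell : vec -> R)
    (gamma : R) (A : vec) (q : vec * R) : vec * R :=
  if mistake N c v ell A q then
    (q.1 + (gamma * ell A) *: (xi_of N c v ell A q).1,
     q.2 + gamma * ell A * (xi_of N c v ell A q).2)
  else q.

Definition projected_strategic_perceptron (N : vec -> R) (c : R) (v : vec -> vec)
    (ell : vec -> R) (L : set (vec * R)) (gamma : R) (A : nat -> vec)
    (q : nat -> vec * R) (T : nat) : Prop :=
  q 0%N = (0, 0) /\
  forall t, (t <= T)%N -> is_proj L (pre_update N c v ell gamma (A t) (q t)) (q t.+1).

End StrategicPerceptron.

(* Main.v *)
Require Import Defs.
From HB Require Import structures.
From mathcomp Require Import all_boot all_order all_algebra.
From mathcomp Require Import boolp classical_sets reals.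
From mathcomp Require Import ring lra.
Import Order.TTheory GRing.Theory Num.Theory.
Local Open Scope ring_scope.
Local Open Scope classical_set_scope.

Lemma dotvC {R : realType} {d : nat} (x y : 'rV[R]_d) : dotv x y = dotv y x.
Proof. by rewrite /dotv; apply: eq_bigr => i _; rewrite mulrC. Qed.

Lemma dotvDl {R : realType} {d : nat} (x y z : 'rV[R]_d) :
  dotv (x + y) z = dotv x z + dotv y z.
Proof. by rewrite /dotv -big_split; apply: eq_bigr => i _; rewrite mxE mulrDl. Qed.

Lemma dotvZl {R : realType} {d : nat} (a : R) (x y : 'rV[R]_d) :
  dotv (a *: x) y = a * dotv x y.
Proof. by rewrite /dotv mulr_sumr; apply: eq_bigr => i _; rewrite mxE mulrA. Qed.

Lemma dotvNl {R : realType} {d : nat} (x y : 'rV[R]_d) :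
  dotv (- x) y = - dotv x y.
Proof. by rewrite -scaleN1r dotvZl mulN1r. Qed.

Lemma dotvBl {R : realType} {d : nat} (x y z : 'rV[R]_d) :
  dotv (x - y) z = dotv x z - dotv y z.
Proof. by rewrite dotvDl dotvNl. Qed.

Lemma dotv0l {R : realType} {d : nat} (y : 'rV[R]_d) : dotv 0 y = 0.
Proof. by rewrite /dotv big1 // => i _; rewrite mxE mul0r. Qed.

Lemma dotvDr {R : realType} {d : nat} (x y z : 'rV[R]_d) :
  dotv z (x + y) = dotv z x + dotv z y.
Proof. by rewrite !(dotvC z) dotvDl. Qed.

Lemma dotvZr {R : realType} {d : nat} (a : R) (x y : 'rV[R]_d) :
  dotv y (a *: x) = a * dotv y x.
Proof. by rewrite !(dotvC y) dotvZl. Qed.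

Lemma dotvNr {R : realType} {d : nat} (x y : 'rV[R]_d) :
  dotv y (- x) = - dotv y x.
Proof. by rewrite !(dotvC y) dotvNl. Qed.

Lemma dotvBr {R : realType} {d : nat} (x y z : 'rV[R]_d) :
  dotv z (x - y) = dotv z x - dotv z y.
Proof. by rewrite dotvDr dotvNr. Qed.

Lemma dotv0r {R : realType} {d : nat} (y : 'rV[R]_d) : dotv y 0 = 0.
Proof. by rewrite dotvC dotv0l. Qed.

Lemma dotv_ge0 {R : realType} {d : nat} (x : 'rV[R]_d) : 0 <= dotv x x.
Proof. by rewrite /dotv; apply: sumr_ge0 => i _; rewrite -expr2 sqr_ge0. Qed.

Lemma dotv_eq0 {R : realType} {d : nat} (x : 'rV[R]_d) : dotv x x = 0 -> x = 0.
Proof.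
move=> /eqP; rewrite /dotv psumr_eq0; last by move=> i _; rewrite -expr2 sqr_ge0.
move=> /allP H; apply/rowP => i; rewrite mxE.
have := H i (mem_index_enum i); rewrite implyTb -expr2 sqrf_eq0 => /eqP.
move=> h; exact: h.
Qed.

Lemma dotv_cs {R : realType} {d : nat} (x y : 'rV[R]_d) :
  (dotv x y) ^+ 2 <= dotv x x * dotv y y.
Proof.
have [a0|apos] := eqVneq (dotv x x) 0.
  by rewrite (dotv_eq0 _ a0) !dotv0l expr0n /= mul0r.
have ha : 0 < dotv x x by rewrite lt_neqAle eq_sym apos dotv_ge0.
set t := dotv x y / dotv x x.
have ta : t * dotv x x = dotv x y by rewrite /t divfK.
have := dotv_ge0 (t *: x - y).
rewrite dotvBl !dotvBr !dotvZl !dotvZr (dotvC y x).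
have := dotv_ge0 y.
nra.
Qed.

Lemma norm2_ge0 {R : realType} {d : nat} (x : 'rV[R]_d) : 0 <= norm2 x.
Proof. exact: sqrtr_ge0. Qed.

Lemma norm2_sq {R : realType} {d : nat} (x : 'rV[R]_d) : norm2 x ^+ 2 = dotv x x.
Proof. by rewrite /norm2 sqr_sqrtr // dotv_ge0. Qed.

Lemma dotv_le_norm {R : realType} {d : nat} (x y : 'rV[R]_d) :
  dotv x y <= norm2 x * norm2 y.
Proof.
have h1 := dotv_cs x y.
rewrite -!norm2_sq -exprMn in h1.
have hp : 0 <= norm2 x * norm2 y by rewrite mulr_ge0 ?norm2_ge0.
move: h1 hp; set P := norm2 x * norm2 y; set g := dotv x y => h1 hp.
nra.
Qed.

Lemma norm2D {R : realType} {d : nat} (x y : 'rV[R]_d) :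
  norm2 (x + y) <= norm2 x + norm2 y.
Proof.
have h : norm2 (x + y) ^+ 2 <= (norm2 x + norm2 y) ^+ 2.
  rewrite norm2_sq dotvDl !dotvDr (dotvC y x) -!norm2_sq.
  have := dotv_le_norm x y; nra.
have := norm2_ge0 (x + y); have := norm2_ge0 x; have := norm2_ge0 y.
nra.
Qed.

Lemma norm2Z {R : realType} {d : nat} (a : R) (x : 'rV[R]_d) :
  norm2 (a *: x) = `|a| * norm2 x.
Proof.
by rewrite /norm2 dotvZl dotvZr mulrA -expr2 sqrtrM ?sqr_ge0 // sqrtr_sqr.
Qed.

Lemma N0 {R : realType} {d : nat} (N : 'rV[R]_d -> R) : is_norm N -> N 0 = 0.
Proof. by case=> _ _ hZ _; rewrite -(scale0r 0) hZ normr0 mul0r. Qed.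

Lemma dualnorm_eq {R : realType} {d : nat} {N : 'rV[R]_d -> R} {v : 'rV[R]_d -> 'rV[R]_d} {y : 'rV[R]_d} :
  valid_selection N v -> y != 0 -> dualnorm N y = dotv y (v y).
Proof.
case=> _ hv _ y0; have [h1 h2] := hv y y0.
apply/le_anti/andP; split.
  apply: ge_sup; first by exists (dotv y (v y)), (v y).
  by move=> _ [w /= hw <-]; exact: h2.
apply: (ub_le_sup); last by exists (v y).
by exists (dotv y (v y)) => _ [w /= hw <-]; exact: h2.
Qed.

Lemma dualnorm0 {R : realType} {d : nat} (N : 'rV[R]_d -> R) :
  is_norm N -> dualnorm N 0 = 0.
Proof.
move=> hN; apply/le_anti/andP; split.
  apply: ge_sup; first by exists 0; exists 0; [rewrite /= N0 | exact: dotv0l].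
  by move=> _ [w /= hw <-]; rewrite dotv0l.
apply: (ub_le_sup); last by exists 0; [rewrite /= N0 | exact: dotv0l].
by exists 0 => _ [w /= hw <-]; rewrite dotv0l.
Qed.

Lemma dotv_pos {R : realType} {d : nat} (y : 'rV[R]_d) : y != 0 -> 0 < dotv y y.
Proof.
move=> y0; rewrite lt_neqAle dotv_ge0 andbT; apply/eqP => h.
by move/eqP: y0; apply; apply: dotv_eq0; rewrite h.
Qed.

Lemma dualnorm_pos {R : realType} {d : nat} {N : 'rV[R]_d -> R} {v : 'rV[R]_d -> 'rV[R]_d} {y : 'rV[R]_d} :
  is_norm N -> valid_selection N v -> y != 0 -> 0 < dualnorm N y.
Proof.
move=> hN hv y0; rewrite (dualnorm_eq hv y0).
case: hv => _ hv _; have [_ h2] := hv y y0.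
case: hN => hge hdef hZ _.
have Npos : 0 < N y.
  rewrite lt_neqAle hge andbT; apply/eqP => h; move/eqP: y0; apply.
  exact: hdef.
apply: (lt_le_trans _ (h2 ((N y)^-1 *: y) _)).
  by rewrite dotvZr mulr_gt0 ?invr_gt0 ?dotv_pos.
rewrite hZ ger0_norm; last by rewrite invr_ge0 ltW.
by rewrite mulVf ?gt_eqF.
Qed.

Lemma dotv_delta {R : realType} {d : nat} (i : 'I_d) (w : 'rV[R]_d) :
  dotv (delta_mx 0 i) w = w 0 i.
Proof.
rewrite /dotv (bigD1 i) //= big1 ?addr0.
  by rewrite mxE !eqxx mul1r.
by move=> j ji; rewrite mxE (negbTE ji) andbF mul0r.
Qed.

Lemma delta_neq0 {R : realType} {d : nat} (i : 'I_d) : (delta_mx 0 i : 'rV[R]_d) != 0.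
Proof.
apply/eqP => /rowP /(_ i); rewrite !mxE !eqxx /=; apply/eqP; exact: oner_neq0.
Qed.

Lemma sel_bound {R : realType} {d : nat} {N : 'rV[R]_d -> R} {v : 'rV[R]_d -> 'rV[R]_d} :
  valid_selection N v -> exists K, forall w, N w <= 1 -> dotv w w <= K.
Proof.
move=> hv; case: (hv) => _ hs _.
pose a i := dotv (delta_mx 0 i) (v (delta_mx 0 i)) : R.
pose b i := dotv (- delta_mx 0 i) (v (- delta_mx 0 i)) : R.
exists (\sum_(i < d) (`|a i| + `|b i|) ^+ 2) => w hw.
rewrite /dotv; apply: ler_sum => i _.
have h1 : w 0 i <= `|a i| + `|b i|.
  have := (hs _ (delta_neq0 i)).2 w hw; rewrite dotv_delta -/(a i) => h.
  have := ler_norm (a i); have := normr_ge0 (b i); lra.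
have h2 : - w 0 i <= `|a i| + `|b i|.
  have hn : (- delta_mx 0 i : 'rV[R]_d) != 0 by rewrite oppr_eq0 delta_neq0.
  have := (hs _ hn).2 w hw; rewrite dotvNl dotv_delta -/(b i) => h.
  have := ler_norm (b i); have := normr_ge0 (a i); lra.
move: h1 h2; set P := `|a i| + `|b i|; set x := w 0 i => h1 h2.
nra.
Qed.

Lemma Cbound_ub {R : realType} {d : nat} {N : 'rV[R]_d -> R} {v : 'rV[R]_d -> 'rV[R]_d} :
  is_norm N -> valid_selection N v -> forall y, norm2 (v y) <= Cbound v.
Proof.
move=> hN hv; have [K hK] := sel_bound hv.
have hb : forall y, dotv (v y) (v y) <= Num.max K 0.
  move=> y; have [->|y0] := eqVneq y 0.
    by case: hv => -> _ _; rewrite dotv0l le_max lexx orbT.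
  case: hv => _ hs _; rewrite le_max (hK _ (hs _ y0).1) //.
move=> y; apply: ub_le_sup; last by exists y.
exists (Num.sqrt (Num.max K 0)) => _ [z _ <-].
by rewrite /norm2 ler_sqrt // le_max lexx orbT.
Qed.

Lemma Cbound_ge0 {R : realType} {d : nat} {N : 'rV[R]_d -> R} {v : 'rV[R]_d -> 'rV[R]_d} :
  is_norm N -> valid_selection N v -> 0 <= Cbound v.
Proof. move=> hN hv; exact: le_trans (norm2_ge0 (v 0)) (Cbound_ub hN hv 0). Qed.

Lemma ge0_from_eps {R : realType} (g h : R) : 0 <= h ->
  (forall e, 0 < e -> e <= 1 -> 0 <= 2 * e * g + e ^+ 2 * h) -> 0 <= g.
Proof.
move=> h0 H; rewrite leNgt; apply/negP => gneg.
have [hz|hpos] := eqVneq h 0.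
  have := H 1 ltr01 (lexx _); rewrite hz; lra.
have hp : 0 < h by rewrite lt_neqAle eq_sym hpos h0.
pose e := Num.min 1 (- g / h).
have e0 : 0 < e by rewrite lt_min ltr01 /= divr_gt0 // oppr_gt0.
have e1 : e <= 1 by rewrite ge_min lexx.
have e2 : e * h <= - g by rewrite -ler_pdivlMr // ge_min lexx orbT.
have := H e e0 e1.
nra.
Qed.

Lemma dotv_exp {R : realType} {d : nat} (x y : 'rV[R]_d) (e : R) :
  dotv (x + e *: y) (x + e *: y) = dotv x x + 2 * e * dotv x y + e ^+ 2 * dotv y y.
Proof. rewrite dotvDl !dotvDr !dotvZl !dotvZr (dotvC y x); ring. Qed.

Lemma dotv_exp2 {R : realType} {d : nat} (x y : 'rV[R]_d) :
  dotv (- (x + y)) (- (x + y)) = dotv x x + 2 * dotv x y + dotv y y.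
Proof. rewrite dotvNl dotvNr opprK dotvDl !dotvDr (dotvC y x); ring. Qed.

Lemma dotvNN {R : realType} {d : nat} (x : 'rV[R]_d) : dotv (- x) (- x) = dotv x x.
Proof. by rewrite dotvNl dotvNr opprK. Qed.

Lemma proj_nonexp {R : realType} {d : nat} (z p u : 'rV[R]_d * R) :
  is_proj (@Lcone R d) z p -> @Lcone R d u -> sqdist p u <= sqdist z u.
Proof.
case=> hp hmin hu.
set a1 := p.1 - z.1; set a2 := p.2 - z.2; set b1 := u.1 - p.1; set b2 := u.2 - p.2.
have key : 0 <= dotv a1 b1 + a2 * b2.
  apply: (@ge0_from_eps _ _ (dotv b1 b1 + b2 ^+ 2)).
    by rewrite addr_ge0 ?dotv_ge0 ?sqr_ge0.
  move=> e e0 e1.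
  have hw : @Lcone R d (p.1 + e *: b1, p.2 + e * b2).
    move=> i /=; rewrite /b1 !mxE; have := hp i; have := hu i.
    nra.
  have := hmin _ hw; rewrite /sqdist /=.
  have -> : p.1 + e *: b1 - z.1 = a1 + e *: b1 by rewrite /a1 addrAC.
  have -> : p.2 + e * b2 - z.2 = a2 + e * b2 by rewrite /a2 addrAC.
  rewrite dotv_exp -/a1 -/a2; nra.
rewrite /sqdist.
have -> : z.1 - u.1 = - (a1 + b1) by rewrite /a1 /b1; rewrite opprD !opprB addrA subrK.
have -> : p.1 - u.1 = - b1 by rewrite /b1 opprB.
rewrite dotv_exp2 dotvNN.
have -> : z.2 - u.2 = - (a2 + b2) by rewrite /a2 /b2; ring.
have -> : p.2 - u.2 = - b2 by rewrite /b2; ring.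
have := dotv_ge0 a1; have := sqr_ge0 a2.
nra.
Qed.

Lemma orthant_dot {R : realType} {d : nat} (x y : 'rV[R]_d) :
  orthant x -> orthant y -> 0 <= dotv x y.
Proof. by move=> hx hy; apply: sumr_ge0 => i _; rewrite mulr_ge0. Qed.

Lemma proxy_form {R : realType} {d : nat} (N : 'rV[R]_d -> R) c v ell a y b :
  0 < c -> exists k, `|k| <= 2 / c /\ proxy N c v ell a y b = a + k *: v y.
Proof.
move=> hc; have hc2 : 0 <= 2 / c by rewrite divr_ge0 // ltW.
rewrite /proxy; case: ifP => _.
  by exists 0; rewrite normr0 scale0r addr0.
set z := (dotv y a + b) / dualnorm N y.
case: ifP => [/andP[z0 z1]|_]; last by exists 0; rewrite normr0 scale0r addr0.
case: ifP => _.
  exists (- z); rewrite normrN ger0_norm // scaleNr; split => //; exact: ltW.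
case: ifP => _; last by exists 0; rewrite normr0 scale0r addr0.
exists (2 / c - z); rewrite ger0_norm; last by rewrite subr_ge0 ltW.
split => //; lra.
Qed.

Lemma margin_step {R : realType} {d : nat} (N : 'rV[R]_d -> R) c v ell
  (ystar a : 'rV[R]_d) bstar K (q : 'rV[R]_d * R) :
  (ell a = 1 \/ ell a = -1) -> 0 < c -> orthant ystar -> orthant q.1 ->
  (forall y, orthant y -> orthant (v y)) ->
  K <= ell a * (dotv ystar a + bstar) ->
  K <= ell a * (dotv ystar (proxy N c v ell a q.1 q.2) + bstar).
Proof.
move=> ha hc hys hq hvo hK.
have hg := orthant_dot _ _ hys (hvo _ hq).
rewrite /proxy; case: ifP => // _.
set z := (dotv q.1 a + q.2) / dualnorm N q.1.
case: ifP => [/andP[z0 z1]|_] //.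
case: ifP => [/eqP he|_].
  rewrite he dotvBr dotvZr; rewrite he in hK; nra.
case: ifP => [/eqP he|_] //.
rewrite he dotvDr dotvZr; rewrite he in hK.
have : 0 <= 2 / c - z by rewrite subr_ge0 ltW.
nra.
Qed.

Lemma mistake_step {R : realType} {d : nat} (N : 'rV[R]_d -> R) c v ell
  (a : 'rV[R]_d) (q : 'rV[R]_d * R) :
  is_norm N -> 0 < c -> valid_selection N v -> (ell a = 1 \/ ell a = -1) ->
  mistake N c v ell a q ->
  ell a * (dotv q.1 (proxy N c v ell a q.1 q.2) + q.2) <= 0.
Proof.
move=> hN hc hv ha; case: q => y b /=.
rewrite /mistake /pred_label /response /proxy /=.
have hci : 0 < c^-1 by rewrite invr_gt0.
have [->|y0] := eqVneq y 0.
  rewrite dualnorm0 // !dotv0l mulr0 mul0r /sgn => /eqP hne.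
  move: hne; case: ifP => hb hne; case: ha => he; rewrite he in hne *;
    try (exfalso; by apply: hne); lra.
rewrite (dualnorm_eq hv y0).
have npos := dualnorm_pos hN hv y0; rewrite (dualnorm_eq hv y0) in npos.
set n := dotv y (v y) in npos *.
set z := (dotv y a + b) / n.
have hz : z * n = dotv y a + b by rewrite /z divfK // gt_eqF.
case: ifP => [/andP[z0 z1]|hr].
  rewrite dotvDr dotvZr -/n.
  have -> : dotv y a + (2 / c - z) * n + b - 2 * n / c = 0.
    by rewrite mulrBl hz; ring.
  rewrite /sgn lexx => /eqP hne.
  case: ha => he; rewrite he in hne *; first by exfalso; apply: hne.
  rewrite eqxx dotvBr dotvZr -/n hz; lra.
rewrite -hz /sgn => /eqP hne.
have [hz0|hz0] := ltrP z 0.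
  have h1 : z * n < 0 by nra.
  have h2 : 0 < 2 * n / c by rewrite !mulr_gt0.
  move: hne; rewrite ifF; last by apply/negbTE; rewrite -ltNge; lra.
  case: ha => he; rewrite he => hne; last by exfalso; apply: hne.
  lra.
move: hr; rewrite hz0 /= => /negbT; rewrite -leNgt => h2.
have h3 : 2 * n / c <= z * n.
  by rewrite mulrAC ler_wpM2r // ltW.
move: hne; rewrite ifT; last by lra.
case: ha => he; rewrite he => hne; first by exfalso; apply: hne.
have : 0 < 2 * n / c by rewrite !mulr_gt0.
lra.
Qed.

Theorem mainTheorem19 (R : realType) (d : nat) (Aset : set 'rV[R]_d)
  (ell : 'rV[R]_d -> R) (N : 'rV[R]_d -> R) (c : R) (v : 'rV[R]_d -> 'rV[R]_d)
  (ystar : 'rV[R]_d) (bstar dstar : R) (T : nat) (A : nat -> 'rV[R]_d)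
  (q : nat -> 'rV[R]_d * R) :
  is_norm N -> 0 < c ->
  (forall a, Aset a -> ell a = 1 \/ ell a = -1) ->
  valid_selection N v ->
  (* Margin assumption *)
  ystar != 0 -> 0 < dstar -> dstar = margin N Aset ell ystar bstar ->
  (forall y b, y != 0 -> margin N Aset ell y b <= dstar) ->
  orthant ystar ->
  (* Boundedness *)
  (exists M, forall a, Aset a -> norm2 a <= M) ->
  (forall y, orthant y -> orthant (v y)) ->
  (forall t, (t <= T)%N -> Aset (A t)) ->
  projected_strategic_perceptron N c v ell (Lcone (d:=d)) 1 A q T ->
  (\sum_(t <- iota 0 T.+1 | mistake N c v ell (A t) (q t))
      hinge ((dstar * dualnorm N ystar)^-1 *: ystar, bstar / (dstar * dualnorm N ystar))
            (xi_of N c v ell (A t) (q t)) (ell (A t)) <= 0) /\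
  ((count (fun t => mistake N c v ell (A t) (q t)) (iota 0 T.+1))%:R <=
     (norm2 ystar ^+ 2 + bstar ^+ 2) * (Dtilde Aset c v ^+ 2 + 1)
     / (dualnorm N ystar ^+ 2 * dstar ^+ 2)).
Proof.
move=> hN hc hell hv ys0 dpos hdm _ hyo [M hM] hvo hA [hq0 hproj].
have npos : 0 < dualnorm N ystar := dualnorm_pos hN hv ys0.
move: npos hdm; set nstar := dualnorm N ystar => npos hdm.
have hmarg : forall a, Aset a -> dstar * nstar <= ell a * (dotv ystar a + bstar).
  move=> a ha.
  set E := [set ell A * (dotv ystar A + bstar) / nstar | A in Aset].
  have hinf : has_inf E.
    apply: contrapT => hni; move: dpos.
    by rewrite hdm /margin -/nstar -/E (inf_out hni) ltxx.
  have h := ge_inf hinf.2.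
  have : inf E <= ell a * (dotv ystar a + bstar) / nstar by apply: h; exists a.
  rewrite -[inf E]/(margin N Aset ell ystar bstar) -hdm.
  by rewrite -ler_pdivlMr.
have horth : forall t, (t <= T.+1)%N -> orthant (q t).1.
  case=> [|t] ht; first by rewrite hq0 => i; rewrite mxE.
  by have [] := hproj t ht.
have dn0 : 0 < dstar * nstar by rewrite mulr_gt0.
set k := (dstar * nstar)^-1.
have k0 : 0 < k by rewrite invr_gt0.
have hk : k * (dstar * nstar) = 1 by rewrite mulVf // gt_eqF.
have hmstep : forall t, (t <= T)%N ->
   dstar * nstar <= ell (A t) * (dotv ystar (proxy N c v ell (A t) (q t).1 (q t).2) + bstar).
  move=> t ht; apply: margin_step => //; [exact: hell (hA t ht) | | exact: hmarg (hA t ht)].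
  by apply: horth; rewrite ltnW.
split.
  rewrite big_seq_cond; apply: sumr_le0 => t /andP[ht _].
  move: ht; rewrite mem_iota add0n ltnS => ht.
  rewrite /hinge /xi_of /= ge_max lexx /= dotvZl -/k.
  have := hmstep t ht.
  set X := dotv ystar _.
  have := ler_wpM2l (ltW k0) (hmstep t ht); rewrite -/X => h1 h2; rewrite hk in h1.
  nra.
set lam := Dtilde Aset c v ^+ 2 + 1.
have lam1 : 1 <= lam by rewrite /lam lerDr sqr_ge0.
have hC := Cbound_ub hN hv; have hC0 := Cbound_ge0 hN hv.
have hD : forall t, (t <= T)%N -> norm2 (A t) <= Dbound Aset.
  move=> t ht; apply: ub_le_sup; last by exists (A t) => //; exact: hA.
  by exists M => _ [a ha <-]; exact: hM.
have hD0 : 0 <= Dbound Aset by apply: le_trans (norm2_ge0 (A 0%N)) (hD 0%N _).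
have hs : forall t, (t <= T)%N ->
    dotv (proxy N c v ell (A t) (q t).1 (q t).2) (proxy N c v ell (A t) (q t).1 (q t).2)
      <= lam - 1.
  move=> t ht; have [kk [hkk ->]] := proxy_form N c v ell (A t) (q t).1 (q t).2 hc.
  rewrite -norm2_sq /lam addrK.
  have h1 := norm2D (A t) (kk *: v (q t).1); rewrite norm2Z in h1.
  have h2 := hD t ht; have h3 := hC (q t).1.
  have h4 := norm2_ge0 (A t + kk *: v (q t).1).
  have h5 : `|kk| * norm2 (v (q t).1) <= 2 / c * Cbound v.
    apply: ler_pM => //. all: try exact: normr_ge0. all: try exact: norm2_ge0.
  have h6 : norm2 (A t + kk *: v (q t).1) <= Dtilde Aset c v by rewrite /Dtilde; lra.
  nra.
set U : 'rV[R]_d * R := ((lam * k) *: ystar, lam * k * bstar).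
have hU : @Lcone R d U.
  move=> i /=; rewrite mxE; apply: mulr_ge0; [apply: mulr_ge0; lra | exact: hyo].
pose Phi t := sqdist (q t) U.
have main : forall t, (t <= T.+1)%N ->
    Phi t + lam * (count (fun t => mistake N c v ell (A t) (q t)) (iota 0 t))%:R <= Phi 0%N.
  elim=> [|t IH] ht; first by rewrite /= mulr0 addr0.
  have htT : (t <= T)%N by [].
  have {IH} IH := IH (ltnW ht).
  have -> : iota 0 t.+1 = iota 0 t ++ [:: t] by rewrite -addn1 iotaD.
  rewrite count_cat /= addn0 natrD mulrDr addrA.
  have hp := proj_nonexp _ _ _ (hproj t htT) hU.
  rewrite /pre_update in hp.
  case hmt : (mistake N c v ell (A t) (q t)) hp => hp; last first.
    rewrite mulr0 addr0; apply: le_trans IH; rewrite lerD2r; exact: hp.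
  have hms := mistake_step _ _ _ _ _ _ hN hc hv (hell _ (hA t htT)) hmt.
  have hmg := hmstep t htT.
  have hss := hs t htT.
  move: hp hms hmg hss IH; rewrite /xi_of /Phi /sqdist /=.
  set s := proxy N c v ell (A t) (q t).1 (q t).2.
  set y := (q t).1; set b := (q t).2.
  move=> hp hms hmg hss IH.
  have e1 : y + (1 * ell (A t)) *: s - (lam * k) *: ystar =
      (y - (lam * k) *: ystar) + ell (A t) *: s by rewrite mul1r addrAC.
  rewrite e1 dotv_exp (dotvBl y _ s) (dotvZl _ ystar s) in hp.
  have hmg2 := ler_wpM2l (mulr_ge0 (le_trans ler01 lam1) (ltW k0)) hmg.
  have e2 : lam * k * (dstar * nstar) = lam by rewrite -mulrA hk mulr1.
  rewrite e2 in hmg2.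
  move: hp hms hmg2 hss IH.
  set P := dotv (y - _) (y - _).
  set C := (count _ _)%:R.
  set X := dotv ystar s.
  case: (hell _ (hA t htT)) => ->; lra.
have hfin := main T.+1 (leqnn _).
set C := (count _ (iota 0 T.+1))%:R in hfin *.
have hPT : 0 <= Phi T.+1 by rewrite /Phi /sqdist addr_ge0 ?dotv_ge0 ?sqr_ge0.
move: hfin hPT; rewrite {2}/Phi /sqdist hq0 /= !sub0r dotvNN dotvZl dotvZr norm2_sq.
set Q := dotv ystar ystar.
set PT := Phi T.+1.
move=> hfin hPT.
have hQ : 0 <= Q by exact: dotv_ge0.
have lam0 : 0 < lam by lra.
have h1 : C <= lam * k ^+ 2 * (Q + bstar ^+ 2).
  rewrite -(ler_pM2l lam0); nra.
rewrite ler_pdivlMr; last by rewrite mulr_gt0 // exprn_gt0.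
have e3 : k ^+ 2 * (nstar ^+ 2 * dstar ^+ 2) = 1.
  by transitivity ((k * (dstar * nstar)) ^+ 2); [ring | rewrite hk expr1n].
have W0 : 0 <= nstar ^+ 2 * dstar ^+ 2 by rewrite mulr_ge0 // sqr_ge0.
have h2 := ler_wpM2r W0 h1.
apply: (le_trans h2); rewrite le_eqVlt; apply/orP; left; apply/eqP.
by rewrite -[RHS]mulr1 -e3; ring.
Qed.
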